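(* Let $\bar u=(u_\beta)_{\beta<\alpha}$ be a densely non-increasing sequence of elements of a linear order $(U,<)$ whose range $\{u_\beta\mid\beta<\alpha\}$ is infinite. Then $\bar u$ can be uniquely factorized as a concatenation $\bar u=\bar v\bar w$ of sequences where the length $\gamma$ of $\bar v$ is a limit ordinal, $\bar v$ is not ultimately constant in $\gamma$, and the range of $\bar w$ is finite.
   Context: Sequences are indexed by countable ordinals; the concatenation $\bar v\bar w$ of $(v_\beta)_{\beta<\gamma}$ and $(w_\beta)_{\beta<\delta}$ is the sequence of length $\gamma+\delta$ equal to $v_\beta$ at $\beta<\gamma$ and to $w_{\beta'}$ at $\gamma+\beta'$. A sequence $(u_\beta)_{\beta<\alpha}$ is constant on $[\gamma,\gamma')$ if $u_\beta=u_\gamma$ for all $\gamma\le\beta<\gamma'$; it is densely non-increasing if for all $\gamma<\gamma'\le\alpha$, either it is constant on $[\gamma,\gamma')$ or there exist $\gamma\le\beta<\beta'<\gamma'$ with $u_\beta>u_{\beta'}$. For a limit ordinal $\gamma\le\alpha$, it is ultimately constant in $\gamma$ if there is $\gamma'<\gamma$ such that it is constant on $[\gamma',\gamma)$. The range of a sequence is the set of its values. *)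

(* Defs.v *)
From Stdlib Require Import List.
Import ListNotations.

(* A countable ordinal alpha is represented by a countable type W carrying a
   well-founded strict total order lt (W is the set of indices beta < alpha).
   A "position" gamma <= alpha is an element of option W:
   Some b denotes the ordinal b < alpha, None denotes alpha itself. *)

Definition strict_total_order {T : Type} (r : T -> T -> Prop) : Prop :=
  (forall x, ~ r x x) /\
  (forall x y z, r x y -> r y z -> r x z) /\
  (forall x y, r x y \/ x = y \/ r y x).

Definition countable (T : Type) : Prop :=
  exists f : T -> nat, forall x y, f x = f y -> x = y.

Section Seq.
Context {W U : Type} (lt : W -> W -> Prop) (ltU : U -> U -> Prop).

Definition le (x y : W) : Prop := lt x y \/ x = y.

Definition before (g : option W) (b : W) : Prop :=
  match g with None => True | Some g0 => lt b g0 end.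

Definition const_on (u : W -> U) (g : W) (g' : option W) : Prop :=
  forall b, le g b -> before g' b -> u b = u g.

Definition densely_nonincreasing (u : W -> U) : Prop :=
  forall (g : W) (g' : option W), before g' g ->
    const_on u g g' \/
    exists b b', le g b /\ lt b b' /\ before g' b' /\ ltU (u b') (u b).

Definition is_limit (g : option W) : Prop :=
  (exists b, before g b) /\
  (forall b, before g b -> exists b', lt b b' /\ before g b').

Definition ult_const (u : W -> U) (g : option W) : Prop :=
  exists g', before g g' /\ const_on u g' g.

Definition finite_set {T : Type} (P : T -> Prop) : Prop :=
  exists l : list T, forall x, P x -> In x l.

Definition range (u : W -> U) : U -> Prop := fun x => exists b, u b = x.

(* Factorization u = v w with |v| = g: v = (u_b)_{b<g} and w = (u_b)_{g<=b<alpha}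
   (reindexed by b = g + b').  Range of the suffix w: *)
Definition suffix_range (u : W -> U) (g : option W) : U -> Prop :=
  fun x => exists b, ~ before g b /\ u b = x.

Definition good_factorization (u : W -> U) (g : option W) : Prop :=
  is_limit g /\ ~ ult_const u g /\ finite_set (suffix_range u g).

End Seq.

(* Main.v *)
Require Import Defs.
From Stdlib Require Import List Classical.

Lemma wf_min {T} (r : T -> T -> Prop) : well_founded r ->
  forall P : T -> Prop, (exists x, P x) -> exists x, P x /\ forall y, P y -> ~ r y x.
Proof.
  intros wf P [x Px]. apply NNPP; intro H.
  assert (forall z, ~ P z) as A.
  { intro z. induction (wf z) as [z _ IH]. intro Pz. apply H. exists z. split; auto.
    intros y Py ry. exact (IH y ry Py). }
  exact (A x Px).
Qed.

Lemma fin_min {U} (ltU : U -> U -> Prop) : strict_total_order ltU ->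
  forall (L : list U) (P : U -> Prop), (exists x, P x) -> (forall x, P x -> In x L) ->
  exists m, P m /\ forall y, P y -> ~ ltU y m.
Proof.
  intros [irr [tr tot]] L. induction L as [|a L IH]; intros P [x Px] HL.
  - destruct (HL x Px).
  - destruct (classic (exists y, P y /\ y <> a)) as [[y [Py ya]]|Hn].
    + destruct (IH (fun z => P z /\ z <> a)) as [m [[Pm ma] Hm]].
      * exists y; auto.
      * intros z [Pz za]. destruct (HL z Pz); [congruence|auto].
      * destruct (classic (P a)) as [Pa|nPa].
        -- destruct (tot a m) as [am|[am|ma']].
           ++ exists a. split; auto. intros z Pz za.
              destruct (classic (z = a)) as [->|zna]; [exact (irr _ za)|].
              apply (Hm z (conj Pz zna)). eauto.
           ++ congruence.
           ++ exists m. split; auto. intros z Pz zm.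
              destruct (classic (z = a)) as [->|zna]; [exact (irr a (tr _ _ _ zm ma'))|].
              exact (Hm z (conj Pz zna) zm).
        -- exists m. split; auto. intros z Pz zm.
           destruct (classic (z = a)) as [->|zna]; [contradiction|].
           exact (Hm z (conj Pz zna) zm).
    + exists x. split; auto. intros z Pz zx.
      assert (z = a) by (apply NNPP; intro; apply Hn; eauto).
      assert (x = a) by (apply NNPP; intro; apply Hn; eauto). subst.
      exact (irr a zx).
Qed.

Section S.
Context {W U : Type} (lt : W -> W -> Prop) (ltU : U -> U -> Prop) (u : W -> U).
Hypothesis slt : strict_total_order lt.
Hypothesis wf : well_founded lt.
Hypothesis sltU : strict_total_order ltU.

Lemma fin_ext (P Q : U -> Prop) a : finite_set P -> (forall x, Q x -> x = a \/ P x) -> finite_set Q.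
Proof.
  intros [l Hl] H. exists (a :: l). intros x Qx. destruct (H x Qx); [left; auto|right; auto].
Qed.

Lemma before_trans g x y : lt x y -> before lt g y -> before lt g x.
Proof. destruct slt as [_ [tr _]]. destruct g; simpl; eauto. Qed.

Lemma exist_good g0 : finite_set (suffix_range lt u g0) ->
  (forall y, before lt g0 y -> ~ finite_set (suffix_range lt u (Some y))) ->
  ~ finite_set (range u) -> good_factorization lt u g0.
Proof.
  destruct slt as [irr [tr tot]].
  intros F M R. split; [split|split].
  - apply NNPP; intro H. apply R. destruct F as [l Hl]. exists l.
    intros x [b <-]. apply Hl. exists b. split; auto. intro. apply H; eauto.
  - intros b Hb. apply NNPP; intro H. apply (M b Hb).
    apply (fin_ext _ _ (u b) F). intros x [p [np <-]].
    destruct (tot p b) as [|[->|bp]]; [contradiction|auto|].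
    right. exists p. split; auto. intro. apply H; eauto.
  - intros [c [Hc C]]. apply (M c Hc).
    apply (fin_ext _ _ (u c) F). intros x [p [np <-]].
    destruct (tot p c) as [|[->|cp]]; [contradiction|auto|].
    destruct (classic (before lt g0 p)).
    + left. apply C; [left; auto|auto].
    + right. exists p. auto.
  - exact F.
Qed.

Lemma uniq_aux g a : good_factorization lt u g -> finite_set (suffix_range lt u (Some a)) ->
  before lt g a -> densely_nonincreasing lt ltU u -> False.
Proof.
  destruct slt as [irr [tr tot]]. destruct sltU as [irrU _].
  intros [[_ Lim] [NU _]] [L HL] Ha D.
  destruct (fin_min ltU sltU L (fun x => exists p, le lt a p /\ before lt g p /\ u p = x))
    as [m [[b [ab [gb <-]] ] Hm]].
  { exists (u a). exists a. split; [right; auto|auto]. }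
  { intros x [p [ap [gp <-]]]. apply HL. exists p. split; auto. simpl. intro pa.
    destruct ap as [ap| ->]; [exact (irr _ (tr _ _ _ pa ap))|exact (irr _ pa)]. }
  assert (exists c, le lt b c /\ before lt g c /\ u c <> u b) as Ex.
  { apply NNPP; intro H. apply NU. exists b. split; auto.
    intros p bp gp. apply NNPP; intro. apply H; eauto. }
  destruct (wf_min lt wf _ Ex) as [c [[bc [gc ucb]] Hc]].
  assert (lt b c) as bc'. { destruct bc as [|<-]; [auto|congruence]. }
  destruct (Lim c gc) as [c' [cc' _]].
  destruct (wf_min lt wf (fun y => lt c y)) as [s [cs Hs]]; [eauto|].
  assert (Hq : forall q, le lt b q -> lt q s -> q <> c -> u q = u b).
  { intros q bq qs qc. destruct (tot q c) as [qc'|[|cq]]; [|contradiction|].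
    - apply NNPP; intro. apply (Hc q); [|auto]. split; auto. split; auto.
      eapply before_trans; eauto.
    - exfalso. exact (Hs q cq qs). }
  destruct (D b (Some s)) as [C|[p [p' [bp [pp' [p's lt']]]]]].
  - simpl; eauto.
  - apply ucb. apply C; auto.
  - assert (p <> c) as pc. { intros ->. exact (Hs p' pp' p's). }
    rewrite (Hq p bp (tr _ _ _ pp' p's) pc) in lt'.
    destruct (classic (p' = c)) as [->|p'c].
    + apply (Hm (u c)); auto. exists c. split; auto.
      left. destruct ab as [ab| ->]; [exact (tr _ _ _ ab bc')|exact bc'].
    + assert (le lt b p') as bp'. { left. destruct bp as [| ->]; eauto. }
      rewrite (Hq p' bp' p's p'c) in lt'. exact (irrU _ lt').
Qed.
End S.

Theorem mainTheorem14 (W U : Type) (lt : W -> W -> Prop) (ltU : U -> U -> Prop)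
  (u : W -> U) :
  strict_total_order lt -> well_founded lt -> countable W ->
  strict_total_order ltU ->
  densely_nonincreasing lt ltU u ->
  ~ finite_set (range u) ->
  exists g : option W, good_factorization lt u g /\
    forall g' : option W, good_factorization lt u g' -> g' = g.
Proof.
  intros slt wf _ sltU D R.
  assert (exists g0, finite_set (suffix_range lt u g0) /\
    forall y, before lt g0 y -> ~ finite_set (suffix_range lt u (Some y))) as [g0 [F M]].
  { destruct (classic (exists a, finite_set (suffix_range lt u (Some a)))) as [E|NE].
    - destruct (wf_min lt wf _ E) as [a [Fa Ha]]. exists (Some a). split; auto.
      intros y Hy Fy. exact (Ha y Fy Hy).
    - exists None. split.
      + exists nil. intros x [b [nb _]]. exfalso. apply nb. exact I.
      + intros y _ Fy. apply NE. eauto. }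
  assert (G := exist_good lt u slt g0 F M R).
  exists g0. split; auto. intros g' G'.
  destruct slt as [irr [tr tot]].
  destruct g0 as [a|], g' as [b|]; auto.
  - destruct (tot a b) as [ab|[->|ba]]; auto; exfalso.
    + apply (uniq_aux lt ltU u (conj irr (conj tr tot)) wf sltU (Some b) a); auto.
      
    + apply (uniq_aux lt ltU u (conj irr (conj tr tot)) wf sltU (Some a) b); auto.
      apply G'.
  - exfalso. apply (uniq_aux lt ltU u (conj irr (conj tr tot)) wf sltU None a); auto. exact I.
  - exfalso. apply (uniq_aux lt ltU u (conj irr (conj tr tot)) wf sltU None b); auto. apply G'. exact I.
Qed.
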